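(* Let $\mathcal T$ be a finite set of time steps and $X^{(t')}\in\mathbb{R}_{\ge0}^{m\times n}$ for $t'\in\mathcal T$, and let $\bar X=\sum_{t'\in\mathcal T}X^{(t')}$. For any $t\in\mathcal T$, let $p^{(t)}=X^{(t)}\mathbf 1_n$ and $q^{(t)}=(X^{(t)})^T\mathbf 1_m$. Then IPF (with zero-marginal handling) on $(\bar X,p^{(t)},q^{(t)})$ converges, i.e. the sequence of scaled matrices $\mathrm{diag}(d^0)\bar X\mathrm{diag}(d^1)$ converges to a matrix with row sums $p^{(t)}$ and column sums $q^{(t)}$.
   Context: IPF with zero-marginal handling on $(X,p,q)$, $X\in\mathbb{R}_{\ge0}^{m\times n}$, $p\in\mathbb{R}_{\ge0}^m$, $q\in\mathbb{R}_{\ge0}^n$, $\sum_ip_i=\sum_jq_j$: start with $d^0=\mathbf 1_m$, $d^1=\mathbf 1_n$; alternately update rows (for each $i$: $d^0_i\leftarrow0$ if $p_i=0$, else $d^0_i\leftarrow p_i/\sum_jX_{ij}d^1_j$) and columns (for each $j$: $d^1_j\leftarrow0$ if $q_j=0$, else $d^1_j\leftarrow q_j/\sum_iX_{ij}d^0_i$); after each update the scaled matrix is $\mathrm{diag}(d^0)X\mathrm{diag}(d^1)$. *)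

(* Defs.v *)
From HB Require Import structures.
From mathcomp Require Import all_boot all_order all_algebra.
From mathcomp Require Import all_classical all_reals all_analysis.
Set Implicit Arguments. Unset Strict Implicit. Unset Printing Implicit Defensive.
Import Order.TTheory GRing.Theory Num.Theory.
Local Open Scope ring_scope.

Section IPF.
Variables (R : realType) (m n : nat).

Definition ipf_row (X : 'M[R]_(m, n)) (p : 'I_m -> R) (d1 : 'I_n -> R) : 'I_m -> R :=
  fun i => if p i == 0 then 0 else p i / (\sum_(j < n) X i j * d1 j).

Definition ipf_col (X : 'M[R]_(m, n)) (q : 'I_n -> R) (d0 : 'I_m -> R) : 'I_n -> R :=
  fun j => if q j == 0 then 0 else q j / (\sum_(i < m) X i j * d0 i).

(* Scaling vectors after k updates: k = 0 is the initial state (1, 1);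
   updates alternate, starting with a row update. *)
Fixpoint ipf_scalings (X : 'M[R]_(m, n)) (p : 'I_m -> R) (q : 'I_n -> R) (k : nat)
  : ('I_m -> R) * ('I_n -> R) :=
  match k with
  | 0%N => (fun _ => 1, fun _ => 1)
  | k'.+1 =>
      let: (d0, d1) := ipf_scalings X p q k' in
      if odd k' then (d0, ipf_col X q d0)
      else (ipf_row X p d1, d1)
  end.

Definition ipf_matrix (X : 'M[R]_(m, n)) (p : 'I_m -> R) (q : 'I_n -> R) (k : nat)
  : 'M[R]_(m, n) :=
  let: (d0, d1) := ipf_scalings X p q k in
  \matrix_(i, j) (d0 i * X i j * d1 j).

End IPF.

(* Main.v *)
Require Import Defs.
From HB Require Import structures.
From mathcomp Require Import all_boot all_order all_algebra.
From mathcomp Require Import all_classical all_reals all_analysis.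
From mathcomp Require Import ring lra.
Import Order.TTheory GRing.Theory Num.Theory numFieldNormedType.Exports.
Local Open Scope ring_scope.

Section Generic.
Variable R : realType.

Lemma ln_le_sub1 (x : R) : 0 < x -> ln x <= x - 1.
Proof.
move=> x0; have := @le_ln1Dx R (x - 1).
have -> : 1 + (x - 1) = x by ring.
apply; lra.
Qed.

Lemma key_term (u v : R) : 0 <= u -> 0 <= v -> (0 < u -> 0 < v) ->
  (Num.sqrt u - Num.sqrt v) ^+ 2 <= u * (ln u - ln v) - u + v.
Proof.
move=> u0 v0 uv.
have [->|u_gt0] := eqVneq u 0.
  by rewrite sqrtr0 sub0r sqrrN sqr_sqrtr // mul0r subr0 add0r.
have up : 0 < u by rewrite lt_neqAle eq_sym u_gt0.
have vp := uv up.
set a := Num.sqrt u; set b := Num.sqrt v.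
have ap : 0 < a by rewrite sqrtr_gt0.
have bp : 0 < b by rewrite sqrtr_gt0.
have ua : u = a ^+ 2 by rewrite sqr_sqrtr.
have vb : v = b ^+ 2 by rewrite sqr_sqrtr.
rewrite ua vb !lnXn //.
have h : ln b - ln a <= b / a - 1.
  rewrite -ln_div ?posrE //; apply: ln_le_sub1; exact: divr_gt0.
have h2 : a * (ln b - ln a) <= b - a.
  have e : a * (b / a - 1) = b - a.
    by rewrite mulrBr mulr1 mulrCA divff ?gt_eqF // mulr1.
  rewrite -e. exact: (ler_wpM2l (ltW ap) h).
rewrite !mulr2n.
nra.
Qed.

Lemma sum_ge_term {I : finType} {F : I -> R} (i0 : I) :
  (forall i, 0 <= F i) -> F i0 <= \sum_i F i.
Proof.
move=> F0; rewrite (bigD1 i0) //= lerDl; apply: sumr_ge0 => i _; exact: F0.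
Qed.

Lemma sum_gt0_term {I : finType} {F : I -> R} (i0 : I) :
  (forall i, 0 <= F i) -> 0 < F i0 -> 0 < \sum_i F i.
Proof. by move=> F0 Fi0; apply: lt_le_trans Fi0 (sum_ge_term i0 F0). Qed.

Lemma hellinger (I : finType) (u v : I -> R) (N : R) :
  (forall i, 0 <= u i) -> (forall i, 0 <= v i) -> (forall i, 0 < u i -> 0 < v i) ->
  \sum_i u i = N -> \sum_i v i = N ->
  0 <= \sum_i u i * (ln (u i) - ln (v i)) /\
  forall i0, (u i0 - v i0) ^+ 2 <= 4 * N * \sum_i u i * (ln (u i) - ln (v i)).
Proof.
move=> u0 v0 uv su sv.
pose t i := u i * (ln (u i) - ln (v i)) - u i + v i.
have tE : \sum_i t i = \sum_i u i * (ln (u i) - ln (v i)).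
  rewrite /t big_split /= sumrB su sv; lra.
have tge i : (Num.sqrt (u i) - Num.sqrt (v i)) ^+ 2 <= t i by exact: key_term (u0 i) (v0 i) (uv i).
have t0 i : 0 <= t i by apply: le_trans (tge i); exact: sqr_ge0.
rewrite -tE; split; first by apply: sumr_ge0.
move=> i0.
have hs := le_trans (tge i0) (sum_ge_term i0 t0).
have uN : u i0 <= N by rewrite -su; exact: sum_ge_term.
have vN : v i0 <= N by rewrite -sv; exact: sum_ge_term.
set a := Num.sqrt (u i0) in hs; set b := Num.sqrt (v i0) in hs.
set S := \sum_i t i in hs *.
have a0 : 0 <= a by exact: sqrtr_ge0.
have b0 : 0 <= b by exact: sqrtr_ge0.
have ua : u i0 = a ^+ 2 by rewrite sqr_sqrtr.
have vb : v i0 = b ^+ 2 by rewrite sqr_sqrtr.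
rewrite ua vb in uN vN *.
have e1 : (a ^+ 2 - b ^+ 2) ^+ 2 = (a - b) ^+ 2 * (a + b) ^+ 2 by ring.
have e2 : (a + b) ^+ 2 <= 4 * N by nra.
have e3 : 0 <= (a - b) ^+ 2 := sqr_ge0 _.
rewrite e1; apply: le_trans (ler_wpM2l e3 e2) _.
rewrite mulrC; apply: ler_wpM2l; last exact: hs.
have : 0 <= N by apply: le_trans uN; exact: sqr_ge0.
lra.
Qed.

End Generic.
Arguments ln_le_sub1 {R x}.
Arguments key_term {R u v}.
Arguments sum_ge_term {R I F} i0.
Arguments sum_gt0_term {R I F} i0.
Arguments hellinger {R I u v N}.

Local Open Scope classical_set_scope.

Lemma cluster_rV (R : realType) (d : nat) (v : nat -> 'rV[R]_d) (C : R) :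
  (forall k i, 0 <= v k ord0 i <= C) ->
  exists w : 'rV[R]_d, forall S, nbhs w S -> forall N0, exists k, (N0 <= k)%N /\ S (v k).
Proof.
move=> hv.
have cA := @rV_compact _ d (fun _ => `[0, C]%classic) (fun _ => @segment_compact R 0 C).
have FA : (v @ \oo) [set x : 'rV[R]_d | forall i, `[0, C]%classic (x ord0 i)].
  by exists 0%N => // k _ i /=; rewrite in_itv /=; exact: hv.
have [w [Aw cw]] := cA (v @ \oo) _ FA.
exists w => S Sn N0.
have := cw (v @` [set k | (N0 <= k)%N]) S _ Sn.
case.
  by exists N0 => // k hk; exists k.
by move=> x [[k hk <-] Sx]; exists k.
Qed.

Lemma close_ge0 (R : realType) (x : R) :
  (forall e, 0 < e -> exists y, 0 <= y /\ `|x - y| < e) -> 0 <= x.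
Proof.
move=> H; rewrite leNgt; apply/negP => xn.
have := H (- x); rewrite oppr_gt0 => /(_ xn) [y [y0]].
rewrite ltr_norml => /andP[h1 h2]; lra.
Qed.

Lemma close_eq0 (R : realType) (x : R) : (forall e, 0 < e -> `|x| < e) -> x = 0.
Proof.
move=> H; apply/eqP; rewrite -normr_le0 leNgt; apply/negP => xp.
by have := H _ xp; rewrite ltxx.
Qed.

Lemma sq_lt_norm (R : realType) (x e : R) : 0 < e -> x ^+ 2 < e ^+ 2 -> `|x| < e.
Proof.
move=> e0; rewrite -(real_normK (num_real x)) => h.
have a0 := normr_ge0 x; move: h; set a := `|x| => h; nra.
Qed.

Lemma close_sum (R : realType) (I : finType) (a b : I -> R) (d : R) :
  (forall i, `|a i - b i| < d) -> `|\sum_i a i - \sum_i b i| <= d * #|I|%:R.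
Proof.
move=> H; rewrite -sumrB; apply: le_trans (ler_norm_sum _ _ _) _.
have -> : d * #|I|%:R = \sum_(i : I) d by rewrite sumr_const mulr_natr.
by apply: ler_sum => i _; exact: ltW.
Qed.

Lemma small_eps (R : realType) (N c : R) : 0 <= N -> 0 < c -> 4 * N * (c / (4 * N + 1)) < c.
Proof.
move=> N0 c0; have d0 : 0 < 4 * N + 1 by lra.
have -> : 4 * N * (c / (4 * N + 1)) = c - c / (4 * N + 1) by field; rewrite gt_eqF.
have : 0 < c / (4 * N + 1) by exact: divr_gt0.
lra.
Qed.
Arguments small_eps {R N c}.
Arguments close_sum {R I a b d}.

Section IPF.
Variables (R : realType) (m n : nat) (B Y : 'M[R]_(m, n)).
Hypothesis hY0 : forall i j, 0 <= Y i j.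
Hypothesis hYB : forall i j, Y i j <= B i j.
Let p := fun i : 'I_m => \sum_(j < n) Y i j.
Let q := fun j : 'I_n => \sum_(i < m) Y i j.

Lemma hB0 i j : 0 <= B i j. Proof. exact: le_trans (hY0 i j) (hYB i j). Qed.
Lemma hp0 i : 0 <= p i. Proof. by apply: sumr_ge0 => j _. Qed.
Lemma hq0 j : 0 <= q j. Proof. by apply: sumr_ge0 => i _. Qed.
Lemma Y_le_p i j : Y i j <= p i. Proof. exact: (sum_ge_term (F := fun j => Y i j) j (hY0 i)). Qed.
Lemma Y_le_q i j : Y i j <= q j. Proof. exact: (sum_ge_term (F := fun i => Y i j) i (hY0^~ j)). Qed.

Lemma p_pos_ex i : 0 < p i -> exists j, 0 < Y i j.
Proof.
move=> pi; have hne : \sum_(j < n) Y i j <> 0 by move=> e; move: pi; rewrite /p e ltxx.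
by have [j /andP[_ h]] := psumr_neq0P (fun j _ => hY0 i j) hne; exists j.
Qed.

Lemma q_pos_ex j : 0 < q j -> exists i, 0 < Y i j.
Proof.
move=> qj; have hne : \sum_(i < m) Y i j <> 0 by move=> e; move: qj; rewrite /q e ltxx.
by have [i /andP[_ h]] := psumr_neq0P (fun i _ => hY0 i j) hne; exists i.
Qed.

Definition Inv (s : ('I_m -> R) * ('I_n -> R)) :=
  [/\ forall i, 0 <= s.1 i, forall j, 0 <= s.2 j,
      forall i, 0 < p i -> 0 < s.1 i & forall j, 0 < q j -> 0 < s.2 j].

Lemma den_row_pos (b : 'I_n -> R) i : (forall j, 0 <= b j) -> (forall j, 0 < q j -> 0 < b j) ->
  0 < p i -> 0 < \sum_(j < n) B i j * b j.
Proof.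
move=> b0 bq /p_pos_ex [j yj].
apply: (sum_gt0_term j) => [k|]; first exact: mulr_ge0 (hB0 _ _) (b0 _).
apply: mulr_gt0; first exact: lt_le_trans yj (hYB _ _).
by apply: bq; apply: lt_le_trans yj (Y_le_q _ _).
Qed.

Lemma den_col_pos (a : 'I_m -> R) j : (forall i, 0 <= a i) -> (forall i, 0 < p i -> 0 < a i) ->
  0 < q j -> 0 < \sum_(i < m) B i j * a i.
Proof.
move=> a0 ap /q_pos_ex [i yi].
apply: (sum_gt0_term (F := fun i => B i j * a i) i) => [k|]; first exact: mulr_ge0 (hB0 _ _) (a0 _).
apply: mulr_gt0; first exact: lt_le_trans yi (hYB _ _).
by apply: ap; apply: lt_le_trans yi (Y_le_p _ _).
Qed.

Lemma inv_sc k : Inv (ipf_scalings B p q k).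
Proof.
elim: k => [|k IH] /=.
  by split=> /= *; first [exact: ler01|exact: ltr01].
move: IH; case: (ipf_scalings B p q k) => a b [/= a0 b0 ap bq].
case: (odd k).
  split => //= [j|j qj].
  - rewrite /ipf_col; case: ifP => _ //; apply: divr_ge0; first exact: hq0.
    by apply: sumr_ge0 => i _; exact: mulr_ge0 (hB0 _ _) (a0 _).
  - rewrite /ipf_col (gt_eqF qj); apply: divr_gt0 => //; exact: den_col_pos.
split => //= [i|i pi].
- rewrite /ipf_row; case: ifP => _ //; apply: divr_ge0; first exact: hp0.
  by apply: sumr_ge0 => j _; exact: mulr_ge0 (hB0 _ _) (b0 _).
- rewrite /ipf_row (gt_eqF pi); apply: divr_gt0 => //; exact: den_row_pos.
Qed.


Definition rsum (M : 'M[R]_(m, n)) i := \sum_(j < n) M i j.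
Definition csum (M : 'M[R]_(m, n)) j := \sum_(i < m) M i j.
Definition rscale (u : 'I_m -> R) (M : 'M[R]_(m, n)) :=
  \matrix_(i, j) (u i / rsum M i * M i j).
Definition cscale (w : 'I_n -> R) (M : 'M[R]_(m, n)) :=
  \matrix_(i, j) (w j / csum M j * M i j).

Definition Mk k := ipf_matrix B p q k.

Lemma Mk_E k i j :
  Mk k i j = (ipf_scalings B p q k).1 i * B i j * (ipf_scalings B p q k).2 j.
Proof. by rewrite /Mk /ipf_matrix; case: (ipf_scalings B p q k) => a b; rewrite mxE. Qed.

Lemma Mk_ge0 k i j : 0 <= Mk k i j.
Proof.
have [a0 b0 _ _] := inv_sc k.
by rewrite Mk_E; apply: mulr_ge0; [apply: mulr_ge0; [exact: a0|exact: hB0]|exact: b0].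
Qed.

Lemma Mk_B0 k i j : B i j = 0 -> Mk k i j = 0.
Proof. by move=> h; rewrite Mk_E h mulr0 mul0r. Qed.

Lemma Mk_pos k i j : 0 < B i j -> 0 < p i -> 0 < q j -> 0 < Mk k i j.
Proof.
have [_ _ ap bq] := inv_sc k => Bp pi qj.
by rewrite Mk_E; apply: mulr_gt0; [apply: mulr_gt0; [exact: ap|]|exact: bq].
Qed.

Lemma Mk_succ k : Mk k.+1 = if odd k then cscale q (Mk k) else rscale p (Mk k).
Proof.
rewrite /Mk /ipf_matrix /=; have := inv_sc k.
case: (ipf_scalings B p q k) => a b [/= a0 b0 ap bq].
case: (odd k); apply/matrixP => i j; rewrite !mxE /=.
  rewrite /csum; under eq_bigr do rewrite mxE.
  have -> : \sum_(i0 < m) a i0 * B i0 j * b j = (\sum_(i0 < m) B i0 j * a i0) * b j.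
    by rewrite mulr_suml; apply: eq_bigr => i0 _; ring.
  rewrite /ipf_col; have [->|qne] := eqVneq (q j) 0; first by rewrite !mul0r mulr0.
  have qj : 0 < q j by rewrite lt_neqAle eq_sym qne hq0.
  have s0 := den_col_pos a j a0 ap qj; have bj := bq j qj.
  by field; rewrite ?gt_eqF.
rewrite /rsum; under eq_bigr do rewrite mxE.
have -> : \sum_(j0 < n) a i * B i j0 * b j0 = a i * (\sum_(j0 < n) B i j0 * b j0).
  by rewrite mulr_sumr; apply: eq_bigr => j0 _; ring.
rewrite /ipf_row; have [->|pne] := eqVneq (p i) 0; first by rewrite !mul0r.
have pi : 0 < p i by rewrite lt_neqAle eq_sym pne hp0.
have s0 := den_row_pos b i b0 bq pi; have ai := ap i pi.
by field; rewrite ?gt_eqF.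
Qed.


Definition N := \sum_(i < m) p i.
Definition tot (M : 'M[R]_(m, n)) := \sum_(i < m) rsum M i.

Lemma Nq : \sum_(j < n) q j = N.
Proof. by rewrite /N /p /q exchange_big. Qed.

Lemma tot_csum M : tot M = \sum_(j < n) csum M j.
Proof. by rewrite /tot /rsum /csum exchange_big. Qed.

Lemma N_ge0 : 0 <= N.
Proof. by apply: sumr_ge0 => i _; exact: hp0. Qed.

Lemma rsum_Mk_pos k i : 0 < p i -> 0 < rsum (Mk k) i.
Proof.
move=> pi; have [j yj] := p_pos_ex i pi.
apply: (sum_gt0_term j) => [j'|]; first exact: Mk_ge0.
apply: Mk_pos => //; first exact: lt_le_trans yj (hYB _ _).
exact: lt_le_trans yj (Y_le_q _ _).
Qed.

Lemma csum_Mk_pos k j : 0 < q j -> 0 < csum (Mk k) j.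
Proof.
move=> qj; have [i yi] := q_pos_ex j qj.
apply: (sum_gt0_term (F := fun i => Mk k i j) i) => [i'|]; first exact: Mk_ge0.
apply: Mk_pos => //; first exact: lt_le_trans yi (hYB _ _).
exact: lt_le_trans yi (Y_le_p _ _).
Qed.

Lemma rsum_rscale M : (forall i, 0 < p i -> 0 < rsum M i) ->
  forall i, rsum (rscale p M) i = p i.
Proof.
move=> h i; rewrite {1}/rsum; under eq_bigr do rewrite mxE.
rewrite -mulr_sumr -/(rsum M i).
have [->|pne] := eqVneq (p i) 0; first by rewrite !mul0r.
have pi : 0 < p i by rewrite lt_neqAle eq_sym pne hp0.
by rewrite divfK // gt_eqF // h.
Qed.

Lemma csum_cscale M : (forall j, 0 < q j -> 0 < csum M j) ->
  forall j, csum (cscale q M) j = q j.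
Proof.
move=> h j; rewrite {1}/csum; under eq_bigr do rewrite mxE.
rewrite -mulr_sumr -/(csum M j).
have [->|qne] := eqVneq (q j) 0; first by rewrite !mul0r.
have qj : 0 < q j by rewrite lt_neqAle eq_sym qne hq0.
by rewrite divfK // gt_eqF // h.
Qed.

Lemma rsum_Mk_even k : ~~ odd k -> forall i, rsum (Mk k.+1) i = p i.
Proof.
by move=> /negbTE ok; rewrite Mk_succ ok; apply: rsum_rscale => i; exact: rsum_Mk_pos.
Qed.

Lemma csum_Mk_odd k : odd k -> forall j, csum (Mk k.+1) j = q j.
Proof.
by move=> ok; rewrite Mk_succ ok; apply: csum_cscale => j; exact: csum_Mk_pos.
Qed.

Lemma tot_Mk k : tot (Mk k.+1) = N.
Proof.
case ok: (odd k).
  by rewrite tot_csum -Nq; apply: eq_bigr => j _; rewrite csum_Mk_odd.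
by rewrite /tot /N; apply: eq_bigr => i _; rewrite rsum_Mk_even ?ok.
Qed.

Definition D (Z M : 'M[R]_(m, n)) :=
  \sum_(i < m) \sum_(j < n) Z i j * (ln (Z i j) - ln (M i j)).

Definition feasible (Z : 'M[R]_(m, n)) :=
  [/\ forall i j, 0 <= Z i j, forall i, rsum Z i = p i,
      forall j, csum Z j = q j & forall i j, B i j = 0 -> Z i j = 0].

Lemma feas_pos Z k i j : feasible Z -> 0 < Z i j ->
  [/\ 0 < p i, 0 < q j & 0 < Mk k i j].
Proof.
move=> [Z0 Zr Zc ZB] zp.
have pi : 0 < p i by rewrite -Zr; apply: lt_le_trans zp (sum_ge_term j (Z0 i)).
have qj : 0 < q j.
  by rewrite -Zc; apply: lt_le_trans zp (sum_ge_term (F := fun i => Z i j) i (Z0^~ j)).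
split=> //; apply: Mk_pos => //.
have [Bz|Bnz] := eqVneq (B i j) 0; first by move: zp; rewrite ZB // ltxx.
by rewrite lt_neqAle eq_sym Bnz hB0.
Qed.

Lemma ln_scale (a b x : R) : 0 < a -> 0 < b -> 0 < x ->
  ln (a / b * x) = ln a - ln b + ln x.
Proof.
move=> a0 b0 x0.
by rewrite lnM ?posrE ?divr_gt0 // ln_div ?posrE.
Qed.

Definition Kk k :=
  if odd k then \sum_(j < n) q j * (ln (q j) - ln (csum (Mk k) j))
  else \sum_(i < m) p i * (ln (p i) - ln (rsum (Mk k) i)).

Lemma D_step Z k : feasible Z -> D Z (Mk k) - D Z (Mk k.+1) = Kk k.
Proof.
move=> fZ; have [Z0 Zr Zc ZB] := fZ.
rewrite /D -sumrB (Mk_succ k) /Kk; case: ifP => ok.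
  have e : forall i j, Z i j * (ln (Z i j) - ln (Mk k i j)) -
      Z i j * (ln (Z i j) - ln (cscale q (Mk k) i j)) =
      Z i j * (ln (q j) - ln (csum (Mk k) j)).
    move=> i j; have [->|zne] := eqVneq (Z i j) 0; first by rewrite !mul0r subrr.
    have zp : 0 < Z i j by rewrite lt_neqAle eq_sym zne Z0.
    have [pi qj Mp] := feas_pos Z k i j fZ zp.
    have cp := csum_Mk_pos k j qj.
    rewrite mxE ln_scale //; ring.
  under eq_bigr do rewrite -sumrB; under eq_bigr do under eq_bigr do rewrite e.
  rewrite exchange_big; apply: eq_bigr => j _.
  by rewrite -mulr_suml -/(csum Z j) Zc.
have e : forall i j, Z i j * (ln (Z i j) - ln (Mk k i j)) -
    Z i j * (ln (Z i j) - ln (rscale p (Mk k) i j)) =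
    Z i j * (ln (p i) - ln (rsum (Mk k) i)).
  move=> i j; have [->|zne] := eqVneq (Z i j) 0; first by rewrite !mul0r subrr.
  have zp : 0 < Z i j by rewrite lt_neqAle eq_sym zne Z0.
  have [pi qj Mp] := feas_pos Z k i j fZ zp.
  have cp := rsum_Mk_pos k i pi.
  rewrite mxE ln_scale //; ring.
under eq_bigr do rewrite -sumrB; under eq_bigr do under eq_bigr do rewrite e.
apply: eq_bigr => i _.
by rewrite -mulr_suml -/(rsum Z i) Zr.
Qed.


Lemma Kk_bound k :
  [/\ 0 <= Kk k.+1, forall i, (p i - rsum (Mk k.+1) i) ^+ 2 <= 4 * N * Kk k.+1
    & forall j, (q j - csum (Mk k.+1) j) ^+ 2 <= 4 * N * Kk k.+1].
Proof.
rewrite /Kk /=; case ok: (odd k) => /=.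
  have [H1 H2] := hellinger (u := p) (v := rsum (Mk k.+1)) (N := N) hp0
    (fun i => sumr_ge0 _ (fun j _ => Mk_ge0 k.+1 i j)) (rsum_Mk_pos k.+1) erefl (tot_Mk k).
  split=> // j; rewrite csum_Mk_odd // subrr expr0n /=.
  by apply: mulr_ge0 => //; apply: mulr_ge0 => //; exact: N_ge0.
have [H1 H2] := hellinger (u := q) (v := csum (Mk k.+1)) (N := N) hq0
  (fun j => sumr_ge0 _ (fun i _ => Mk_ge0 k.+1 i j)) (csum_Mk_pos k.+1) Nq
  (etrans (esym (tot_csum (Mk k.+1))) (tot_Mk k)).
split=> // i; rewrite rsum_Mk_even ?ok // subrr expr0n /=.
by apply: mulr_ge0 => //; apply: mulr_ge0 => //; exact: N_ge0.
Qed.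


Lemma D_bounds Z k : feasible Z ->
  (0 <= D Z (Mk k.+1)) /\
  (forall i j, (Z i j - Mk k.+1 i j) ^+ 2 <= 4 * N * D Z (Mk k.+1)).
Proof.
move=> fZ; have [Z0 Zr Zc ZB] := fZ.
have DE : D Z (Mk k.+1) = \sum_(x : 'I_m * 'I_n)
    Z x.1 x.2 * (ln (Z x.1 x.2) - ln (Mk k.+1 x.1 x.2)).
  by rewrite /D pair_bigA.
have sZ : \sum_(x : 'I_m * 'I_n) Z x.1 x.2 = N.
  by rewrite -pair_bigA /N; apply: eq_bigr => i _; rewrite -Zr.
have sM : \sum_(x : 'I_m * 'I_n) Mk k.+1 x.1 x.2 = N.
  by rewrite -pair_bigA -(tot_Mk k).
have [H1 H2] := hellinger (u := fun x : 'I_m * 'I_n => Z x.1 x.2)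
  (v := fun x => Mk k.+1 x.1 x.2) (N := N) (fun x => Z0 _ _)
  (fun x => Mk_ge0 _ _ _) (fun x zp => let: And3 _ _ h := feas_pos Z k.+1 x.1 x.2 fZ zp in h) sZ sM.
rewrite DE; split=> // i j; exact: (H2 (i, j)).
Qed.

Lemma feasY : feasible Y.
Proof.
split=> [i j|i|j|i j Bz]; [exact: hY0|by []|by []|].
by apply/eqP; rewrite eq_le hY0 andbT -Bz; exact: hYB.
Qed.

Lemma Kk_small e : 0 < e -> exists N0, forall k, (N0 <= k)%N -> Kk k.+1 < e.
Proof.
move=> e0.
pose d k := D Y (Mk k.+1).
have dstep k : d k.+1 = d k - Kk k.+1.
  by have := D_step Y k.+1 feasY; rewrite /d; lra.
have dni : {homo d : a b / (a <= b)%N >-> b <= a}.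
  apply/nonincreasing_seqP => k; rewrite dstep.
  by have [K0 _ _] := Kk_bound k; lra.
have lb : has_lbound (range d).
  by exists 0 => _ [k _ <-]; have [] := D_bounds Y k feasY.
have cv := nonincreasing_cvgn dni lb.
have e2 : 0 < e / 2 by lra.
move/cvgrPdist_lt: cv => /(_ _ e2) [N0 _ HN].
exists N0 => k hk.
have h1 := HN k hk; have h2 := HN k.+1 (leqW hk).
move: h1 h2 => /=; rewrite !ltr_norml => /andP[a1 a2] /andP[b1 b2].
have := dstep k; lra.
Qed.

Lemma Mk_le_N k i j : Mk k.+1 i j <= N.
Proof.
rewrite -(tot_Mk k); apply: le_trans (sum_ge_term j (Mk_ge0 k.+1 i)) _.
exact: (sum_ge_term (F := rsum (Mk k.+1)) i
  (fun i => sumr_ge0 _ (fun j _ => Mk_ge0 k.+1 i j))).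
Qed.

Theorem ipf_conv : exists L : 'M[R]_(m, n),
  (Mk @ \oo --> L) /\ (forall i, rsum L i = p i) /\ (forall j, csum L j = q j).
Proof.
pose v k := mxvec (Mk k.+1).
have vE k i j : v k ord0 (mxvec_index i j) = Mk k.+1 i j by rewrite /v mxvecE.
have vb k x : 0 <= v k ord0 x <= N.
  by case/mxvec_indexP: x => i j; rewrite vE Mk_ge0 Mk_le_N.
have [w cw] := @cluster_rV R (m * n) v N vb.
pose L := vec_mx w.
have LE i j : L i j = w ord0 (mxvec_index i j) by rewrite -(mxvecE L) /L vec_mxK.
have closeN e : 0 < e -> nbhs w [set x : 'rV[R]_(m * n) | forall i j,
    `|w ord0 (mxvec_index i j) - x ord0 (mxvec_index i j)| < e].
  move=> e0; have := nbhsx_ballx w e e0; apply: filterS => x.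
  rewrite -ball_normE /= => H i j; apply: le_lt_trans H.
  rewrite [X in _ <= X]mx_normrE.
  have := le_bigmax 0 (fun ij : 'I_1 * 'I_(m * n) => `|(w - x) ij.1 ij.2|)
    (ord0, mxvec_index i j).
  by rewrite /= !mxE.
have clK e eps : 0 < e -> 0 < eps -> exists k,
    (forall i j, `|L i j - Mk k.+1 i j| < e) /\ Kk k.+1 < eps.
  move=> e0 eps0; have [N0 HN] := Kk_small eps eps0.
  have [k [hk Hk]] := cw _ (closeN e e0) N0.
  exists k; split; last exact: HN.
  by move=> i j; rewrite LE -vE; exact: Hk.
have L0 i j : 0 <= L i j.
  apply: close_ge0 => e e0; have [k [H _]] := clK e 1 e0 ltr01.
  by exists (Mk k.+1 i j); split; [exact: Mk_ge0|exact: H].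
have LB i j : B i j = 0 -> L i j = 0.
  move=> Bz; apply: close_eq0 => e e0; have [k [H _]] := clK e 1 e0 ltr01.
  by have := H i j; rewrite Mk_B0 // subr0.
have NN := N_ge0.
have Lr i : rsum L i = p i.
  apply/eqP; rewrite -subr_eq0; apply/eqP; apply: close_eq0 => e e0.
  have c0 : 0 < (e / 2) ^+ 2 by rewrite exprn_gt0 // divr_gt0.
  have n1 : 0 < n%:R + 1 :> R by have := ler0n R n; lra.
  set dl := e / 2 / (n%:R + 1).
  have d0 : 0 < dl by rewrite !divr_gt0.
  have hd : dl * n%:R + dl = e / 2.
    by rewrite /dl -{2}(mulr1 (e / 2 / _)) -mulrDr divfK // gt_eqF.
  have eps0 : 0 < (e / 2) ^+ 2 / (4 * N + 1) by rewrite divr_gt0 //; lra.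
  have [k [H HK]] := clK _ _ d0 eps0.
  have [K0 Hr _] := Kk_bound k.
  have h1 : `|rsum L i - rsum (Mk k.+1) i| <= dl * n%:R.
    by have := close_sum (fun j => H i j); rewrite card_ord.
  have h2 : `|p i - rsum (Mk k.+1) i| < e / 2.
    apply: sq_lt_norm; first by lra.
    apply: le_lt_trans (Hr i) _; apply: le_lt_trans (small_eps NN c0).
    by apply: ler_wpM2l; [lra|exact: ltW].
  have h3 := ler_distD (rsum (Mk k.+1) i) (rsum L i) (p i).
  rewrite (distrC (rsum (Mk k.+1) i)) in h3.
  lra.
have Lc j : csum L j = q j.
  apply/eqP; rewrite -subr_eq0; apply/eqP; apply: close_eq0 => e e0.
  have c0 : 0 < (e / 2) ^+ 2 by rewrite exprn_gt0 // divr_gt0.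
  have n1 : 0 < m%:R + 1 :> R by have := ler0n R m; lra.
  set dl := e / 2 / (m%:R + 1).
  have d0 : 0 < dl by rewrite !divr_gt0.
  have hd : dl * m%:R + dl = e / 2.
    by rewrite /dl -{2}(mulr1 (e / 2 / _)) -mulrDr divfK // gt_eqF.
  have eps0 : 0 < (e / 2) ^+ 2 / (4 * N + 1) by rewrite divr_gt0 //; lra.
  have [k [H HK]] := clK _ _ d0 eps0.
  have [K0 _ Hc] := Kk_bound k.
  have h1 : `|csum L j - csum (Mk k.+1) j| <= dl * m%:R.
    by have := close_sum (fun i => H i j); rewrite card_ord.
  have h2 : `|q j - csum (Mk k.+1) j| < e / 2.
    apply: sq_lt_norm; first by lra.
    apply: le_lt_trans (Hc j) _; apply: le_lt_trans (small_eps NN c0).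
    by apply: ler_wpM2l; [lra|exact: ltW].
  have h3 := ler_distD (csum (Mk k.+1) j) (csum L j) (q j).
  rewrite (distrC (csum (Mk k.+1) j)) in h3.
  lra.
have fL : feasible L by split.
pose f k := D L (Mk k.+1).
have fstep k : f k.+1 = f k - Kk k.+1.
  by have := D_step L k.+1 fL; rewrite /f; lra.
have fni : {homo f : a b / (a <= b)%N >-> b <= a}.
  apply/nonincreasing_seqP => k; rewrite fstep.
  by have [K0 _ _] := Kk_bound k; lra.
have fsmall eps : 0 < eps -> exists k, f k < eps.
  move=> eps0.
  have mn1 : 0 < (m * n)%:R + 1 :> R by have := ler0n R (m * n); lra.
  set c := eps / ((m * n)%:R + 1).
  have c0 : 0 < c by rewrite divr_gt0.
  have hc1 : c * (m * n)%:R + c = eps.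
    by rewrite /c -{2}(mulr1 (eps / _)) -mulrDr divfK // gt_eqF.
  have H0 : forall ij : 'I_m * 'I_n, nbhs w [set x : 'rV[R]_(m * n) |
      L ij.1 ij.2 * (ln (L ij.1 ij.2) - ln (x ord0 (mxvec_index ij.1 ij.2))) < c].
    move=> -[i j].
    have [Lz|Lnz] := eqVneq (L i j) 0.
      apply: (@filterS _ (nbhs w) _ setT); last exact: filterT.
      by move=> x _ /=; rewrite Lz mul0r.
    have Lp : 0 < L i j by rewrite lt_neqAle eq_sym Lnz L0.
    have hc : {for w, continuous (fun x : 'rV[R]_(m * n) =>
        ln (x ord0 (mxvec_index i j)))}.
      apply: (continuous_comp (f := fun x : 'rV[R]_(m * n) => x ord0 (mxvec_index i j))
        (g := @ln R)).
        exact: coord_continuous.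
      by rewrite /= -LE; exact: continuous_ln.
    have hN := (cvgrPdist_lt _ _).1 hc (c / L i j) (divr_gt0 c0 Lp).
    have {}hN := hN (nbhs_filter w).
    apply: (@filterS _ (nbhs w) _ _ _ _ hN) => x /= hx.
    rewrite -LE in hx.
    rewrite -(ltr_pM2l Lp) mulrCA divff ?gt_eqF // mulr1 in hx.
    apply: le_lt_trans hx; apply: ler_wpM2l; [exact: ltW|exact: ler_norm].
  have hn : nbhs w [set x : 'rV[R]_(m * n) | forall ij : 'I_m * 'I_n,
      L ij.1 ij.2 * (ln (L ij.1 ij.2) - ln (x ord0 (mxvec_index ij.1 ij.2))) < c].
    exact: filter_forall H0.
  have [k [_ Hk]] := cw _ hn 0%N.
  exists k.
  have Hk' (ij : 'I_m * 'I_n) : L ij.1 ij.2 * (ln (L ij.1 ij.2) - ln (Mk k.+1 ij.1 ij.2)) <= c.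
    by rewrite -vE; exact: ltW (Hk ij).
  rewrite /f /D pair_bigA; apply: le_lt_trans (ler_sum _ (fun ij _ => Hk' ij)) _.
  rewrite sumr_const card_prod !card_ord -mulr_natr.
  lra.
exists L; split; last by split.
apply/cvgrPdist_lt => e e0.
have c0 : 0 < e ^+ 2 by rewrite exprn_gt0.
have eps0 : 0 < e ^+ 2 / (4 * N + 1) by rewrite divr_gt0 //; lra.
have [k0 hk0] := fsmall _ eps0.
exists k0.+1 => // -[//|t] ht.
change (mx_norm (L - Mk t.+1) < e); rewrite mx_normrE.
apply: bigmax_lt => // -[i j] _ /=.
have -> : (L - Mk t.+1) i j = L i j - Mk t.+1 i j by rewrite !mxE.
apply: sq_lt_norm => //.
have [_ Hb] := D_bounds L t fL.
apply: le_lt_trans (Hb i j) _; apply: le_lt_trans _ (small_eps NN c0).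
apply: ler_wpM2l; first lra.
apply: ltW; apply: le_lt_trans hk0; exact: fni.
Qed.

End IPF.

Local Close Scope classical_set_scope.

Theorem mainTheorem6 (R : realType) (m n : nat) (T : finType)
  (X : T -> 'M[R]_(m, n)) (hX : forall t i j, 0 <= X t i j) (t : T) :
  let Xbar := \sum_(t' : T) X t' in
  let p := fun i : 'I_m => \sum_(j < n) X t i j in
  let q := fun j : 'I_n => \sum_(i < m) X t i j in
  exists L : 'M[R]_(m, n),
    (ipf_matrix Xbar p q @ \oo --> L)%classic /\
    (forall i, \sum_(j < n) L i j = p i) /\
    (forall j, \sum_(i < m) L i j = q j).
Proof.
move=> Xbar p q.
have hYB : forall i j, X t i j <= Xbar i j.
  move=> i j; rewrite /Xbar summxE.
  exact: (sum_ge_term (F := fun t' => X t' i j) t (fun t' => hX t' i j)).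
have [L [cv [Lr Lc]]] := @ipf_conv R m n Xbar (X t) (hX t) hYB.
by exists L; split; [exact: cv|split; [exact: Lr|exact: Lc]].
Qed.
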